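(* Let $n\geq 2$, $p\geq 1$, and $$\Omega=\{(x',x_n)\in\mathbb R^{n-1}\times\mathbb R: |x'|<1,\ 0<x_n<1-|x'|^2\}.$$ Then there is a constant $C>0$ depending only on $n,p$ such that the function $$w(x',x_n)=Cx_n-Cx_n^{\frac{2}{n+p}}(1-|x'|^2)^{\frac{n+p-2}{n+p}}$$ is smooth and convex in $\Omega$ and satisfies $\det D^2 w\leq |w|^{-p}$ in $\Omega$ and $w=0$ on $\partial\Omega$. *)

(* Defs.v *)
From HB Require Import structures.
From mathcomp Require Import all_boot all_order all_algebra.
From mathcomp Require Import all_classical all_reals all_analysis.
Set Implicit Arguments. Unset Strict Implicit. Unset Printing Implicit Defensive.
Import Order.TTheory GRing.Theory Num.Theory.
Import numFieldNormedType.Exports.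
Local Open Scope classical_set_scope.
Local Open Scope ring_scope.

(* Points of R^n are row vectors x : 'rV[R]_n, written x = (x', x_n) with
   x' = first n-1 coordinates and x_n the last coordinate. *)

Definition xlast (R : realType) (n : nat) (x : 'rV[R]_n) : R :=
  \sum_(i < n | ((i : nat) == n.-1)%N) x ord0 i.

Definition sqnorm' (R : realType) (n : nat) (x : 'rV[R]_n) : R :=
  \sum_(i < n | ((i : nat) < n.-1)%N) x ord0 i ^+ 2.

Definition Omega (R : realType) (n : nat) : set 'rV[R]_n :=
  [set x | sqnorm' x < 1 /\ 0 < xlast x /\ xlast x < 1 - sqnorm' x].

Definition bdry (R : realType) (n : nat) (A : set 'rV[R]_n) : set 'rV[R]_n :=
  closure A `\` interior A.

Definition wfun (R : realType) (n : nat) (p C : R) (x : 'rV[R]_n) : R :=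
  C * xlast x
  - C * (xlast x `^ (2 / (n%:R + p)))
      * ((1 - sqnorm' x) `^ ((n%:R + p - 2) / (n%:R + p))).

Definition iterD (R : realType) (n : nat) (vs : seq 'rV[R]_n)
  (f : 'rV[R]_n -> R) : 'rV[R]_n -> R :=
  foldr (fun v g => 'D_v g) f vs.

Definition smooth_on (R : realType) (n : nat) (A : set 'rV[R]_n)
  (f : 'rV[R]_n -> R) : Prop :=
  forall vs : seq 'rV[R]_n, forall x, A x -> differentiable (iterD vs f) x.

Definition convex_on (R : realType) (n : nat) (A : set 'rV[R]_n)
  (f : 'rV[R]_n -> R) : Prop :=
  forall x y (t : R), A x -> A y -> 0 <= t <= 1 ->
    f (t *: x + (1 - t) *: y) <= t * f x + (1 - t) * f y.

Definition evec (R : realType) (n : nat) (i : 'I_n) : 'rV[R]_n :=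
  delta_mx ord0 i.

Definition hessian (R : realType) (n : nat) (f : 'rV[R]_n -> R)
  (x : 'rV[R]_n) : 'M[R]_n :=
  \matrix_(i < n, j < n) ('D_(evec R i) ('D_(evec R j) f)) x.

(* Main.v *)
Require Import Defs.
From HB Require Import structures.
From mathcomp Require Import all_boot all_order all_algebra.
From mathcomp Require Import all_classical all_reals all_analysis.
From mathcomp.algebra_tactics Require Import ring lra.
Import Order.TTheory GRing.Theory Num.Theory.
Import numFieldNormedType.Exports.
Local Open Scope classical_set_scope.
Local Open Scope ring_scope.

Lemma det_special (F : fieldType) (k : nat) (c d : F) (u : 'I_k.+1 -> F)
  (M : 'M[F]_k.+1) :
  (forall i j, M i j = c * u i * u j + d * ((i == j) && (i != ord_max))%:R) ->
  u ord_max != 0 ->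
  \det M = d ^+ k * c * u ord_max ^+ 2.
Proof.
move=> HM u0.
pose E := \matrix_(i, j) ((i == j)%:R +
   ((j == ord_max) && (i != ord_max))%:R * (u i / u ord_max)) : 'M[F]_k.+1.
pose T := \matrix_(i, j) (if i == ord_max then c * u ord_max * u j
   else d * (i == j)%:R) : 'M[F]_k.+1.
have -> : M = E *m T.
  apply/matrixP => i j; rewrite HM !mxE (bigD1 i) //= !mxE eqxx /=.
  have [->|im] := eqVneq i ord_max.
    rewrite /= andbF mulr0 addr0 mul0r addr0 mul1r big1 ?addr0 //.
    move=> kp kn; rewrite !mxE eq_sym (negbTE kn) eqxx andbF /=.
    by rewrite ?mul0r ?add0r ?mul0r.
  rewrite /= andbT mul0r addr0 mul1r (bigD1 ord_max) /=; last by rewrite eq_sym.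
  rewrite !mxE eqxx /= im (negbTE im) /= add0r mul1r.
  rewrite big1 ?addr0; last first.
    move=> k' /andP[ki km]; rewrite !mxE eq_sym (negbTE ki) (negbTE km) /=.
    by rewrite add0r mul0r mul0r.
  rewrite [d * _ + _]addrC; congr (_ + _).
  by field.
have imx : forall i j : 'I_k.+1, (i < j)%N -> i != ord_max.
  move=> i j ij; rewrite -val_eqE /= neq_ltn.
  by rewrite (leq_trans ij) // -ltnS.
have tE : is_trig_mx E^T.
  apply/is_trig_mxP => i j ij; rewrite !mxE.
  have ne1 : (j == i) = false by rewrite -val_eqE /= gtn_eqF.
  by rewrite ne1 (negbTE (imx _ _ ij)) /= add0r mul0r.
have tT : is_trig_mx T.
  apply/is_trig_mxP => i j ij; rewrite !mxE.
  have ne1 : (i == j) = false by rewrite -val_eqE /= ltn_eqF.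
  by rewrite (negbTE (imx _ _ ij)) ne1 mulr0.
rewrite det_mulmx -det_tr !det_trig //.
rewrite big1 ?mul1r; last first.
  by move=> i _; rewrite !mxE eqxx andbN mul0r addr0.
rewrite big_ord_recr /= !mxE eqxx.
rewrite (eq_bigr (fun _ => d)); last first.
  move=> i _; rewrite !mxE eqxx mulr1.
  suff -> : (widen_ord (leqnSn k) i == ord_max) = false by [].
  by rewrite -val_eqE /= ltn_eqF.
by rewrite prodr_const card_ord expr2 !mulrA.
Qed.

Section S.
Variables (R : realType) (m : nat).
Local Notation V := 'rV[R]_m.+1.

Lemma zero_near_diff (h : V -> R) x : (\forall y \near x, h y = 0) ->
  differentiable h x.
Proof.
move=> hz; have hx : h x = 0 := nbhs_singleton hz.
have hz0 : \forall y \near (0:V), h (x + y) = 0.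
  exact: ((nbhs0P (fun y => h y = 0) x).1 hz).
have E : h \o shift x = cst (h x) + \0 +o_ (0:V) id.
  apply/eqaddoP => e e0; near=> y.
  rewrite /= hx addr0 subr0.
  rewrite [X in `|X|]/=.
  have -> : h (y + x) = 0 by rewrite addrC; near: y.
  by rewrite normr0 mulr_ge0 // ltW.
have d0 : 'd h x = \0 :> (V -> R) by apply: diff_unique => //; exact: cst_continuous.
apply/diff_locallyP; rewrite d0; split => //; exact: cst_continuous.
Unshelve. all: by end_near. Qed.

Lemma near_eq_diff (f g : V -> R) x : (\forall y \near x, f y = g y) ->
  differentiable f x -> differentiable g x.
Proof.
move=> fg df.
have -> : g = f + (g - f) by apply/funext => y /=; rewrite addrC subrK.
apply: differentiableD => //; apply: zero_near_diff.
near=> y. have -> : (g - f) y = g y - f y by []. by rewrite (near fg y) // subrr.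
Unshelve. all: by end_near. Qed.
Arguments near_eq_diff {f g x}.


Lemma is_derive_lin (f : V -> R) x v :
  (forall (a : R) y z, f (a *: y + z) = a * f y + f z) -> continuous f ->
  is_derive x v f (f v).
Proof.
move=> H cf.
pose fL : {linear V -> R} := HB.pack f (GRing.isLinear.Build R V R *:%R f H).
have df : differentiable (fL : V -> R) x by exact: linear_differentiable.
split; first exact: diff_derivable.
have dl := @diff_lin R V R fL x cf. rewrite deriveE //.
exact: (congr1 (fun g => g v) dl).
Qed.

Definition DD (f : V -> R) x v d := differentiable f x /\ 'D_v f x = d.

Lemma DD_cst (c : R) x v : DD (fun _ => c) x v 0.
Proof. split; [exact: differentiable_cst | exact: derive_cst]. Qed.

Lemma DD_coord i x v : DD (fun y : V => y ord0 i) x v (v ord0 i).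
Proof.
split; first exact: differentiable_coord.
have H : forall (a : R) (y z : V), (a *: y + z) ord0 i = a * y ord0 i + z ord0 i.
  by move=> a y z; rewrite !mxE.
by have [_ ->] := @is_derive_lin (fun y : V => y ord0 i) x v H (@coord_continuous R 1 m.+1 ord0 i).
Qed.

Lemma DD_add f g x v a b : DD f x v a -> DD g x v b ->
  DD (fun y => f y + g y) x v (a + b).
Proof.
move=> [df fa] [dg gb]; split; first exact: (differentiableD df dg).
have -> : (fun y => f y + g y) = f + g by [].
by rewrite deriveD ?fa ?gb //; exact: diff_derivable.
Qed.
Arguments DD_add {f g x v a b}.

Lemma DD_mul f g x v a b : DD f x v a -> DD g x v b ->
  DD (fun y => f y * g y) x v (f x * b + g x * a).
Proof.
move=> [df fa] [dg gb]; split; first exact: (differentiableM df dg).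
have -> : (fun y => f y * g y) = f * g by [].
by rewrite deriveM ?fa ?gb //; exact: diff_derivable.
Qed.
Arguments DD_mul {f g x v a b}.

Lemma DD_ext f g x v a : (\forall y \near x, f y = g y) -> DD f x v a ->
  DD g x v a.
Proof.
move=> fg [df fa]; split; first exact: (near_eq_diff fg df).
by rewrite -fa; apply/esym/near_eq_derive.
Qed.
Arguments DD_ext {f g x v a}.

Lemma DD_pow (c : R) f x v a : DD f x v a -> 0 < f x ->
  DD (fun y => f y `^ c) x v (c * f x `^ (c - 1) * a).
Proof.
move=> [df fa] fx0.
have dp : differentiable (@powR R ^~ c) (f x).
  by apply/derivable1_diffP; have [h _] := is_derive1_powR c fx0.
have dc : differentiable ((@powR R ^~ c) \o f) x by exact: differentiable_comp.
split; first exact: dc.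
have -> : (fun y => f y `^ c) = (@powR R ^~ c) \o f by [].
rewrite deriveE // diff_comp //= diff1E // powR_derive1 ?in_itv /= ?fx0 //.
have E := @deriveE R _ _ f x v df. rewrite -E fa. exact: mulrC.
Qed.
Arguments DD_pow c {f x v a}.

Lemma DD_sum (I : Type) (r : seq I) (F : I -> V -> R) d x v :
  (forall i, DD (F i) x v (d i)) ->
  DD (fun y => \sum_(i <- r) F i y) x v (\sum_(i <- r) d i).
Proof.
move=> H; elim: r => [|i r IH].
  have -> : (fun y => \sum_(i <- [::]) F i y) = fun _ => 0.
    by apply/funext => y; rewrite big_nil.
  by rewrite big_nil; exact: DD_cst.
have -> : (fun y => \sum_(j <- i :: r) F j y) = fun y => F i y + \sum_(j <- r) F j y.
  by apply/funext => y; rewrite big_cons.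
by rewrite big_cons; apply: DD_add.
Qed.
Arguments DD_sum {I} r {F d x v}.

Lemma DD_eq f g x v a b : f =1 g -> a = b -> DD f x v a -> DD g x v b.
Proof. by move=> /funext -> ->. Qed.
Arguments DD_eq {f g x v a b}.

Local Notation U := (@Omega R m.+1).

Lemma xlastE (x : V) : xlast x = x ord0 ord_max.
Proof. by rewrite /xlast (big_pred1 ord_max) // => i /=; rewrite -val_eqE. Qed.

Lemma DD_t x v : DD (fun y : V => xlast y) x v (xlast v).
Proof.
apply: (@DD_eq (fun y : V => y ord0 ord_max) _ _ _ (v ord0 ord_max)).
- by move=> y; rewrite xlastE.
- by rewrite xlastE.
exact: DD_coord.
Qed.

Definition dsq (x v : V) :=
  \sum_(i < m.+1) ((i < m)%N%:R * (2 * v ord0 i)) * x ord0 i.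

Lemma DD_sq x v : DD (fun y : V => sqnorm' y) x v (dsq x v).
Proof.
apply: (@DD_eq (fun y : V => \sum_(i < m.+1)
   (if (i < m)%N then y ord0 i * y ord0 i else 0)) _ _ _
   (\sum_(i < m.+1)
   (if (i < m)%N then x ord0 i * v ord0 i + x ord0 i * v ord0 i else 0))).
- by move=> y; rewrite /sqnorm' [RHS]big_mkcond /=; apply: eq_bigr => i _; case: ifP; rewrite ?expr2.
- rewrite /dsq; apply: eq_bigr => i _; case: (i < m)%N; rewrite ?mul0r //.
  by rewrite mul1r -mulr2n mulr_natl mulrnAl mulrC.
apply: DD_sum => i; case: (i < m)%N; last exact: DD_cst.
exact: DD_mul (DD_coord _ _ _) (DD_coord _ _ _).
Qed.

Lemma DD_s x v : DD (fun y : V => 1 - sqnorm' y) x v (- dsq x v).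
Proof.
apply: (DD_eq _ _ (DD_add (DD_cst 1 x v) (DD_mul (DD_cst (-1) x v) (DD_sq x v)))).
- by move=> y; rewrite mulN1r.
- by rewrite add0r mulr0 addr0 mulN1r.
Qed.

Lemma Ut x : U x -> 0 < xlast x. Proof. by case=> _ []. Qed.
Lemma Us x : U x -> 0 < 1 - sqnorm' x.
Proof. by case=> _ [h1 h2]; exact: lt_trans h1 h2. Qed.
Arguments Ut {x}. Arguments Us {x}.

Lemma U_open : open U.
Proof.
have -> : U = ((fun y : V => sqnorm' y) @^-1` [set r | r < 1]) `&`
   (((fun y : V => xlast y) @^-1` [set r | 0 < r]) `&`
    ((fun y : V => 1 - sqnorm' y - xlast y) @^-1` [set r | 0 < r])).
  by apply/seteqP; split => y /=; rewrite subr_gt0.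
apply: openI; [|apply: openI]; apply: open_comp;
  try (exact: open_lt); try (exact: open_gt); move=> y _;
  apply: differentiable_continuous.
- exact: (DD_sq y 0).1.
- exact: (DD_t y 0).1.
- exact: (differentiableB (DD_s y 0).1 (DD_t y 0).1).
Qed.

Lemma U_nbhs x : U x -> \forall y \near x, U y.
Proof. by move=> Ux; apply: open_nbhs_nbhs; split => //; exact: U_open. Qed.

Inductive K : (V -> R) -> Prop :=
| Kc c : K (fun _ => c)
| Kx i : K (fun y => y ord0 i)
| Kt a : K (fun y => xlast y `^ a)
| Ks b : K (fun y => (1 - sqnorm' y) `^ b)
| Kadd f g : K f -> K g -> K (fun y => f y + g y)
| Kmul f g : K f -> K g -> K (fun y => f y * g y)
| Kext f g : K f -> (forall y, U y -> f y = g y) -> K g.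
Arguments Kadd {f g}. Arguments Kmul {f g}. Arguments Kext {f g}.

Lemma K_diff f : K f -> forall x, U x -> differentiable f x.
Proof.
elim => {f}.
- by move=> c x _; exact: (DD_cst c x 0).1.
- by move=> i x _; exact: (DD_coord i x 0).1.
- by move=> a x Ux; exact: (DD_pow a (DD_t x 0) (Ut Ux)).1.
- by move=> b x Ux; exact: (DD_pow b (DD_s x 0) (Us Ux)).1.
- move=> f g _ IHf _ IHg x Ux.
  exact: (DD_add (conj (IHf x Ux) erefl) (conj (IHg x Ux) erefl)).1.
- move=> f g _ IHf _ IHg x Ux.
  exact: (DD_mul (conj (IHf x Ux) erefl) (conj (IHg x Ux) erefl)).1.
- move=> f g _ IHf fg x Ux.
  apply: (near_eq_diff _ (IHf x Ux)).
  near=> y; apply: fg; near: y; exact: U_nbhs.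
Unshelve. all: by end_near. Qed.
Arguments K_diff {f}.

Lemma K_DD f x v : K f -> U x -> DD f x v ('D_v f x).
Proof. by move=> Kf Ux; split => //; exact: K_diff Kf x Ux. Qed.
Arguments K_DD {f x} v.

Lemma K_sum (I : Type) (r : seq I) (F : I -> V -> R) :
  (forall i, K (F i)) -> K (fun y => \sum_(i <- r) F i y).
Proof.
move=> H; elim: r => [|i r IH].
  by apply: (Kext (Kc 0)) => y _; rewrite big_nil.
by apply: (Kext (Kadd (H i) IH)) => y _; rewrite big_cons.
Qed.
Arguments K_sum {I} r {F}.

Lemma K_der f : K f -> forall v, K ('D_v f).
Proof.
elim => {f}.
- by move=> c v; apply: (Kext (Kc 0)) => y _; rewrite (DD_cst c y v).2.
- by move=> i v; apply: (Kext (Kc (v ord0 i))) => y _; rewrite (DD_coord i y v).2.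
- move=> a v; apply: (Kext (Kmul (Kmul (Kc a) (Kt (a - 1))) (Kc (xlast v)))).
  by move=> y Uy; rewrite (DD_pow a (DD_t y v) (Ut Uy)).2.
- move=> b v.
  have Kd : K (fun y => - dsq y v).
    apply: (Kext (Kmul (Kc (-1)) (K_sum (index_enum 'I_m.+1)
      (fun i => Kmul (Kc ((i < m)%N%:R * (2 * v ord0 i))) (Kx i))))).
    by move=> y _; rewrite mulN1r.
  apply: (Kext (Kmul (Kmul (Kc b) (Ks (b - 1))) Kd)).
  by move=> y Uy; rewrite (DD_pow b (DD_s y v) (Us Uy)).2.
- move=> f g Kf IHf Kg IHg v; apply: (Kext (Kadd (IHf v) (IHg v))).
  by move=> y Uy; rewrite (DD_add (K_DD v Kf Uy) (K_DD v Kg Uy)).2.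
- move=> f g Kf IHf Kg IHg v.
  apply: (Kext (Kadd (Kmul Kf (IHg v)) (Kmul Kg (IHf v)))).
  by move=> y Uy; rewrite (DD_mul (K_DD v Kf Uy) (K_DD v Kg Uy)).2.
- move=> f g Kf IHf fg v; apply: (Kext (IHf v)) => y Uy.
  apply: near_eq_derive; near=> z; apply: fg; near: z; exact: U_nbhs.
Unshelve. all: by end_near. Qed.

Lemma K_smooth f : K f -> smooth_on U f.
Proof.
move=> Kf vs x Ux; apply: K_diff Ux.
by elim: vs => //= v vs IH; exact: K_der.
Qed.

Lemma K_w (p C : R) : K (@wfun R m.+1 p C).
Proof.
have Kl : K (fun y : V => xlast y).
  by apply: (Kext (Kx ord_max)) => y _; rewrite xlastE.
apply: (Kext (Kadd (Kmul (Kc C) Kl)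
  (Kmul (Kmul (Kc (- C)) (Kt (2 / (m.+1%:R + p)))) (Ks ((m.+1%:R + p - 2) / (m.+1%:R + p)))))).
by move=> y _; rewrite /wfun !mulNr.
Qed.

End S.

Arguments near_eq_diff {R m f g x}.
Arguments DD_add {R m f g x v a b}.
Arguments DD_mul {R m f g x v a b}.
Arguments DD_ext {R m f g x v a}.
Arguments DD_pow {R m} c {f x v a}.
Arguments DD_sum {R m I} r {F d x v}.
Arguments DD_eq {R m f g x v a b}.
Arguments Ut {R m x}. Arguments Us {R m x}.
Arguments DD_cst {R m}. Arguments DD_coord {R m}. Arguments DD_t {R m}.
Arguments DD_s {R m}. Arguments DD_sq {R m}. Arguments dsq {R m}.
Arguments DD {R m}. Arguments U_nbhs {R m x}. Arguments xlastE {R m}.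
Arguments K_diff {R m f}. Arguments K_smooth {R m f}. Arguments K_w {R m}.

Section C.
Variables (R : realType) (m : nat).
Local Notation V := 'rV[R]_m.+1.
Local Notation U := (@Omega R m.+1).

Lemma amgm (a b u v : R) : 0 < a -> 0 < b -> a + b = 1 -> 0 <= u -> 0 <= v ->
  u `^ a * v `^ b <= a * u + b * v.
Proof.
move=> a0 b0 ab u0 v0.
have := @conjugate_powR R (u `^ a) (v `^ b) a^-1 b^-1 (powR_ge0 _ _) (powR_ge0 _ _).
rewrite !invr_gt0 !invrK => /(_ a0 b0 ab).
rewrite -!powRrM !mulfV ?gt_eqF // !powRr1 //.
by rewrite [_ * a]mulrC [_ * b]mulrC.
Qed.

Lemma geo_split (a b u v T S : R) : 0 < a -> 0 < b -> a + b = 1 ->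
  0 <= u -> 0 <= v -> 0 < T -> 0 < S ->
  u `^ a * v `^ b <= T `^ a * S `^ b * (a * (u / T) + b * (v / S)).
Proof.
move=> a0 b0 ab u0 v0 T0 S0.
have -> : u `^ a * v `^ b = T `^ a * S `^ b * ((u / T) `^ a * (v / S) `^ b).
  rewrite -[u in LHS](@divfK _ T) ?gt_eqF // -[v in LHS](@divfK _ S) ?gt_eqF //.
  rewrite [_ / T * T]mulrC [_ / S * S]mulrC.
  rewrite (powRM _ (ltW T0) (divr_ge0 u0 (ltW T0))).
  rewrite (powRM _ (ltW S0) (divr_ge0 v0 (ltW S0))).
  by rewrite mulrACA.
apply: ler_wpM2l; first by rewrite mulr_ge0 ?powR_ge0.
by apply: amgm => //; apply: divr_ge0 => //; apply: ltW.
Qed.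

Lemma geo_concave {a b l u1 v1 u2 v2 : R} : 0 < a -> 0 < b -> a + b = 1 ->
  0 <= l <= 1 -> 0 < u1 -> 0 < v1 -> 0 < u2 -> 0 < v2 ->
  l * (u1 `^ a * v1 `^ b) + (1 - l) * (u2 `^ a * v2 `^ b) <=
  (l * u1 + (1 - l) * u2) `^ a * (l * v1 + (1 - l) * v2) `^ b.
Proof.
move=> a0 b0 ab /andP[l0 l1] u10 v10 u20 v20.
set T := l * u1 + (1 - l) * u2; set S := l * v1 + (1 - l) * v2.
have T0 : 0 < T.
  rewrite /T; have [->|lp] := eqVneq l 0; first by rewrite mul0r add0r subr0 mul1r.
  have lp' : 0 < l by rewrite lt_neqAle eq_sym lp.
  apply: (lt_le_trans (mulr_gt0 lp' u10)); rewrite lerDl mulr_ge0 ?subr_ge0 //; exact: ltW.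
have S0 : 0 < S.
  rewrite /S; have [->|lp] := eqVneq l 0; first by rewrite mul0r add0r subr0 mul1r.
  have lp' : 0 < l by rewrite lt_neqAle eq_sym lp.
  apply: (lt_le_trans (mulr_gt0 lp' v10)); rewrite lerDl mulr_ge0 ?subr_ge0 //; exact: ltW.
set G := T `^ a * S `^ b.
apply: (@le_trans _ _ (l * (G * (a * (u1 / T) + b * (v1 / S))) +
   (1 - l) * (G * (a * (u2 / T) + b * (v2 / S))))).
  apply: lerD; apply: ler_wpM2l; rewrite ?subr_ge0 //; apply: geo_split => //; exact: ltW.
rewrite le_eqVlt; apply/orP; left; apply/eqP.
have -> : b = 1 - a by rewrite -ab addrC addKr.
rewrite /T /S in T0 S0 *.
field; apply/andP; split; exact: lt0r_neq0.
Qed.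

Lemma xlast_comb (l : R) (x y : V) :
  xlast (l *: x + (1 - l) *: y) = l * xlast x + (1 - l) * xlast y.
Proof. by rewrite !xlastE !mxE. Qed.

Lemma sq_comb {l : R} (x y : V) : 0 <= l <= 1 ->
  sqnorm' (l *: x + (1 - l) *: y) <= l * sqnorm' x + (1 - l) * sqnorm' y.
Proof.
move=> /andP[l0 l1].
rewrite /sqnorm' !mulr_sumr -big_split /=; apply: ler_sum => i _; rewrite !mxE.
set a := x ord0 i; set b := y ord0 i.
rewrite -subr_ge0.
have -> : l * a ^+ 2 + (1 - l) * b ^+ 2 - (l * a + (1 - l) * b) ^+ 2 =
  l * (1 - l) * (a - b) ^+ 2 by ring.
by rewrite mulr_ge0 ?sqr_ge0 // mulr_ge0 // subr_ge0.
Qed.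

Lemma w_convex (C a b : R) : 0 <= C -> 0 < a -> 0 < b -> a + b = 1 ->
  convex_on U (fun x : V => C * xlast x - C * xlast x `^ a * (1 - sqnorm' x) `^ b).
Proof.
move=> C0 a0 b0 ab x y l Ux Uy l01.
have /andP[l0 l1] := l01.
rewrite xlast_comb.
have key := geo_concave a0 b0 ab l01 (Ut Ux) (Us Ux) (Ut Uy) (Us Uy).
set T := l * xlast x + (1 - l) * xlast y.
set S := l * (1 - sqnorm' x) + (1 - l) * (1 - sqnorm' y).
set sz := 1 - sqnorm' (l *: x + (1 - l) *: y).
have hs : S <= sz.
  rewrite /S /sz; have := sq_comb x y l01; lra.
have S0 : 0 <= S.
  have ux := ltW (Us Ux); have uy := ltW (Us Uy).
  by rewrite /S addr_ge0 // mulr_ge0 // subr_ge0.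
have hp : S `^ b <= sz `^ b.
  by apply: (ge0_ler_powR (ltW b0)); rewrite ?nnegrE //; exact: le_trans S0 hs.
have hQ : l * (xlast x `^ a * (1 - sqnorm' x) `^ b) +
          (1 - l) * (xlast y `^ a * (1 - sqnorm' y) `^ b) <= T `^ a * sz `^ b.
  apply: le_trans key _; apply: ler_wpM2l => //; exact: powR_ge0.
have := mulr_ge0 C0 (eqbRL (subr_ge0 _ _) hQ).
rewrite -!mulrA.
move: (T `^ a * sz `^ b) (xlast x `^ a * (1 - sqnorm' x) `^ b) (xlast y `^ a * (1 - sqnorm' y) `^ b) => Q P1 P2.
rewrite /T; nra.
Qed.

Lemma bdry_zero (C a b : R) (x : V) : a != 0 -> a + b = 1 -> bdry U x ->
  C * xlast x - C * xlast x `^ a * (1 - sqnorm' x) `^ b = 0.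
Proof.
move=> a0 ab [clx nint].
pose Cl := ((fun y : V => sqnorm' y) @^-1` [set r | r <= 1]) `&`
   (((fun y : V => xlast y) @^-1` [set r | 0 <= r]) `&`
    ((fun y : V => 1 - sqnorm' y - xlast y) @^-1` [set r | 0 <= r])).
have Clc : closed Cl.
  apply: closedI; [|apply: closedI]; apply: preimage_closed;
    try (exact: closed_le); try (exact: closed_ge); move=> y _;
    apply: differentiable_continuous.
  - exact: (DD_sq y 0).1.
  - exact: (DD_t y 0).1.
  - exact: (differentiableB (DD_s y 0).1 (DD_t y 0).1).
have UCl : U `<=` Cl.
  move=> y [h1 [h2 h3]]; split; [|split] => /=; rewrite ?subr_ge0; exact: ltW.
have [h1 [h2 h3]] : Cl x.
  have e := (closure_id Cl).1 Clc; rewrite e; exact: (closureS UCl clx).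
rewrite /= subr_ge0 in h3; rewrite /= in h1 h2.
have nU : ~ U x.
  by move=> Ux; apply: nint; rewrite ((interior_id U).1 (U_open _ _)).
have [t0|tp] := eqVneq (xlast x) 0.
  by rewrite t0 powR0 // mulr0 mul0r subrr.
have tp' : 0 < xlast x by rewrite lt_neqAle eq_sym tp.
have ts : xlast x = 1 - sqnorm' x.
  apply/eqP; rewrite eq_le h3 /=; rewrite leNgt; apply/negP => lt.
  apply: nU; split; last by split.
  by have := lt_trans tp' lt; rewrite subr_gt0.
rewrite -ts -mulrA -powRD; last by rewrite ab oner_eq0.
by rewrite ab powRr1 ?subrr // ltW.
Qed.

End C.

Section H.
Variables (R : realType) (m : nat).
Local Notation V := 'rV[R]_m.+1.
Local Notation U := (@Omega R m.+1).

Definition ww (a b C : R) (y : V) :=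
  C * xlast y - C * xlast y `^ a * (1 - sqnorm' y) `^ b.

Definition Fw (a b C : R) (v y : V) :=
  C * xlast v - C * (xlast y `^ a * (b * (1 - sqnorm' y) `^ (b - 1) * (- dsq y v))
    + (1 - sqnorm' y) `^ b * (a * xlast y `^ (a - 1) * xlast v)).

Lemma DD_val f g (x v : V) d : DD f x v d -> f =1 g -> 'D_v g x = d.
Proof. by move=> [_ <-] /funext ->. Qed.

Lemma DD_w a b C (y v : V) : U y -> DD (ww a b C) y v (Fw a b C v y).
Proof.
move=> Uy.
apply: (DD_eq _ _ (DD_add (DD_mul (DD_cst C y v) (DD_t y v))
  (DD_mul (DD_mul (DD_cst (-C) y v) (DD_pow a (DD_t y v) (Ut Uy)))
          (DD_pow b (DD_s y v) (Us Uy))))).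
- by move=> z; rewrite /ww; ring.
- by rewrite /Fw; ring.
Qed.

Lemma DD_dsq (x u v : V) : DD (fun y => dsq y v) x u (dsq u v).
Proof.
rewrite /dsq; apply: DD_sum => i.
apply: (DD_eq _ _ (DD_mul (DD_cst _ x u) (DD_coord i x u))) => //.
by rewrite mulr0 addr0.
Qed.

Lemma hess_entry a b C (x : V) i j : U x ->
  hessian (ww a b C) x i j = 'D_(evec R i) (Fw a b C (evec R j)) x.
Proof.
move=> Ux; rewrite mxE; apply: near_eq_derive; near=> y.
apply: (DD_w a b C y (evec R j) _).2; near: y; exact: U_nbhs.
Unshelve. all: by end_near. Qed.

Lemma powR_sub1 (x r : R) : 0 < x -> x `^ (r - 1) = x `^ r / x.
Proof.
move=> x0; rewrite powRB ?powRr1 ?ltW //.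
by apply/implyP => _; rewrite gt_eqF.
Qed.

Lemma hess_formula a b C (x : V) i j : a + b = 1 -> U x ->
  hessian (ww a b C) x i j =
  C * xlast x `^ a * (1 - sqnorm' x) `^ b * a * b *
    (xlast (evec R i) / xlast x + dsq x (evec R i) / (1 - sqnorm' x)) *
    (xlast (evec R j) / xlast x + dsq x (evec R j) / (1 - sqnorm' x)) +
  C * xlast x `^ a * (1 - sqnorm' x) `^ b * b *
    dsq (evec R i) (evec R j) / (1 - sqnorm' x).
Proof.
move=> ab Ux; rewrite hess_entry //.
set u := evec R i; set v := evec R j.
have Ta := DD_pow a (DD_t x u) (Ut Ux).
have Ta1 := DD_pow (a - 1) (DD_t x u) (Ut Ux).
have Sb := DD_pow b (DD_s x u) (Us Ux).
have Sb1 := DD_pow (b - 1) (DD_s x u) (Us Ux).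
have Dq := DD_dsq x u v.
rewrite (@DD_val _ (Fw a b C v) _ _ _ (DD_add (DD_cst (C * xlast v) x u) (DD_mul (DD_cst (-C) x u)
  (DD_add (DD_mul Ta (DD_mul (DD_mul (DD_cst b x u) Sb1) (DD_mul (DD_cst (-1) x u) Dq)))
          (DD_mul Sb (DD_mul (DD_mul (DD_cst a x u) Ta1) (DD_cst (xlast v) x u))))))); last first.
  by move=> y; rewrite /Fw; ring.
have t0 := Ut Ux; have s0 := Us Ux.
rewrite !(powR_sub1 _ _ t0) !(powR_sub1 _ _ s0).
have -> : b = 1 - a by rewrite -ab addrC addKr.
field.
by rewrite !gt_eqF.
Qed.

Lemma xlast_evec i : xlast (evec R i : V) = (i == ord_max)%:R.
Proof. by rewrite xlastE /evec mxE eqxx eq_sym. Qed.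

Lemma dsq_evec_max (x : V) : dsq x (evec R ord_max) = 0.
Proof.
rewrite /dsq big1 // => k _; rewrite /evec mxE eqxx /=.
have [->|km] := eqVneq k ord_max; first by rewrite /= ltnn mul0r mul0r.
by rewrite mulr0 mulr0 mul0r.
Qed.

Lemma dsq_ee i j : dsq (evec R i : V) (evec R j) = 2 * ((i == j) && (i != ord_max))%:R.
Proof.
rewrite /dsq (bigD1 i) //= big1 ?addr0; last first.
  by move=> k ki; rewrite /evec !mxE eqxx (negbTE ki) /= mulr0.
rewrite /evec !mxE /= !eqxx /= mulr1.
have -> : (i < m)%N = (i != ord_max).
  by rewrite -val_eqE /= ltn_neqAle -ltnS ltn_ord andbT.
case: (i != ord_max); last by rewrite andbF !mul0r mulr0.
by rewrite andbT mul1r.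
Qed.

Lemma det_hess a b C (x : V) : a + b = 1 -> U x ->
  \det (hessian (ww a b C) x) =
  (C * xlast x `^ a * (1 - sqnorm' x) `^ b * b * 2 / (1 - sqnorm' x)) ^+ m *
  (C * xlast x `^ a * (1 - sqnorm' x) `^ b * a * b) * (xlast x)^-1 ^+ 2.
Proof.
move=> ab Ux.
have t0 := Ut Ux; have s0 := Us Ux.
rewrite (@det_special _ _ (C * xlast x `^ a * (1 - sqnorm' x) `^ b * a * b)
  (C * xlast x `^ a * (1 - sqnorm' x) `^ b * b * 2 / (1 - sqnorm' x)) (fun i => xlast (evec R i : V) / xlast x +
   dsq x (evec R i) / (1 - sqnorm' x))).
- by rewrite xlast_evec dsq_evec_max eqxx mul0r addr0 mul1r.
- move=> i j; rewrite hess_formula // dsq_ee; ring.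
- by rewrite xlast_evec dsq_evec_max eqxx mul0r addr0 mul1r invr_eq0 gt_eqF.
Qed.

Lemma keyQ (p t s : R) : 0 <= p -> 0 < t -> 0 < s ->
  let N := m.+1%:R + p in
  (t `^ (2 / N) * s `^ ((N - 2) / N)) ^+ m * (t `^ (2 / N) * s `^ ((N - 2) / N)) *
  (t `^ (2 / N) * s `^ ((N - 2) / N)) `^ p =
  t ^+ 2 * (s ^+ m * s `^ (p - 1)).
Proof.
move=> p0 t0 s0 N.
have N0 : N != 0.
  have h := ltr0Sn R m; rewrite /N gt_eqF //; lra.
set Q := t `^ (2 / N) * s `^ ((N - 2) / N).
have Q0 : 0 <= Q by rewrite mulr_ge0 ?powR_ge0.
rewrite -exprSr -powR_mulrn // -powRD; last first.
  by apply/implyP => _; rewrite /Q mulf_neq0 // gt_eqF // powR_gt0.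
rewrite -/N /Q powRM ?powR_ge0 // -!powRrM !divfK //.
rewrite -(powR_mulrn 2 (ltW t0)); congr (_ * _).
have -> : N - 2 = m%:R + (p - 1) by rewrite /N -natr1; ring.
rewrite [LHS]powRD ?powR_mulrn ?ltW //.
by apply/implyP => _; rewrite gt_eqF.
Qed.

Lemma sqnorm'_ge0 (x : V) : 0 <= sqnorm' x.
Proof. by rewrite /sqnorm' sumr_ge0 // => i _; rewrite sqr_ge0. Qed.

Lemma final_ineq (p C : R) (x : V) : 1 <= p -> 0 < C -> C <= 1 ->
  let N := m.+1%:R + p in let a := 2 / N in let b := (N - 2) / N in
  0 < a -> 0 < b -> a + b = 1 ->
  C * ((2 * b) ^+ m * a * b) <= 1 -> U x ->
  \det (hessian (ww a b C) x) <= `|ww a b C x| `^ (- p).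
Proof.
move=> p1 C0 C1 N a b a0 b0 ab CK Ux.
rewrite det_hess // /ww.
have t0 := Ut Ux; have s0 := Us Ux.
have ts : xlast x < 1 - sqnorm' x by case: Ux => _ [].
have s1 : 1 - sqnorm' x <= 1 by rewrite lerBlDr lerDl sqnorm'_ge0.
have p0 : 0 <= p by apply: le_trans p1.
move: (xlast x) (1 - sqnorm' x) t0 s0 ts s1 => t s t0 s0 ts s1.
have A0 : 0 < t `^ a by apply: powR_gt0.
have B0 : 0 < s `^ b by apply: powR_gt0.
have K : (t `^ a * s `^ b) ^+ m * (t `^ a * s `^ b) * (t `^ a * s `^ b) `^ p =
  t ^+ 2 * (s ^+ m * s `^ (p - 1)) := keyQ p t s p0 t0 s0.
have Qt : t < t `^ a * s `^ b.
  have {1}-> : t = t `^ a * t `^ b.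
    rewrite -powRD; last by apply/implyP => _; rewrite gt_eqF.
    by rewrite ab powRr1 // ltW.
  rewrite ltr_pM2l //; apply: gt0_ltr_powR => //; rewrite nnegrE; exact: ltW.
move: (t `^ a) (s `^ b) A0 B0 K Qt => A B A0 B0 K Qt.
have Qt' : 0 < A * B - t by rewrite subr_gt0.
have wE : `|C * t - C * A * B| = C * (A * B - t).
  have -> : C * t - C * A * B = - (C * (A * B - t)) by ring.
  by rewrite normrN gtr0_norm // mulr_gt0.
rewrite wE powRN.
have P0 : 0 < (C * (A * B - t)) `^ p by apply: powR_gt0; rewrite mulr_gt0.
rewrite -[X in _ <= X]div1r ler_pdivlMr //.
have h1 : (C * (A * B - t)) `^ p <= C `^ p * (A * B) `^ p.
  rewrite (powRM _ (ltW C0) (ltW Qt')).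
  apply: ler_wpM2l; first exact: powR_ge0.
  apply: (ge0_ler_powR p0); rewrite ?nnegrE.
  - exact: ltW.
  - exact: ltW (mulr_gt0 A0 B0).
  - by rewrite lerBlDr lerDl ltW.
have D0 : 0 <= (C * A * B * b * 2 / s) ^+ m * (C * A * B * a * b) * t^-1 ^+ 2.
  have h2 : (0:R) < 2 := ltr0Sn R 1.
  apply: mulr_ge0; first apply: mulr_ge0.
  - apply: exprn_ge0; apply: ltW; apply: divr_gt0 => //.
    by repeat apply: mulr_gt0 => //.
  - by apply: ltW; repeat apply: mulr_gt0 => //.
  - by apply: exprn_ge0; rewrite invr_ge0 ltW.
apply: le_trans (ler_wpM2l D0 h1) _.
have sm0 : s ^+ m != 0 by rewrite expf_neq0 // gt_eqF.
have E : (C * A * B * b * 2 / s) ^+ m * (C * A * B * a * b) * t^-1 ^+ 2 *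
    (C `^ p * (A * B) `^ p) =
  C ^+ m * C * C `^ p * ((2 * b) ^+ m * a * b) *
    (((A * B) ^+ m * (A * B) * (A * B) `^ p) / (s ^+ m * t ^+ 2)).
  rewrite (_ : C * A * B * b * 2 / s = (C * (2 * b) * (A * B)) / s); last by ring.
  rewrite expr_div_n !exprMn.
  move: (C ^+ m) ((2 * b) ^+ m) ((A * B) ^+ m) (s ^+ m) sm0 => cm bm qm sm sm0.
  move: (C `^ p) ((A * B) `^ p) => cp qp.
  by field; rewrite gt_eqF.
rewrite E K.
have -> : t ^+ 2 * (s ^+ m * s `^ (p - 1)) / (s ^+ m * t ^+ 2) = s `^ (p - 1).
  move: (s ^+ m) sm0 (s `^ (p - 1)) => sm sm0 sp.
  by field; rewrite gt_eqF.
have hCm : C ^+ m <= 1 by rewrite exprn_ile1 // ltW.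
have hCp : C `^ p <= 1.
  have := ge0_ler_powR p0 (ltW C0 : C \in Num.nneg) (ler01 : (1:R) \in Num.nneg) C1.
  by rewrite powR1.
have hsp : s `^ (p - 1) <= 1.
  have := ge0_ler_powR (eqbRL (subr_ge0 _ _) p1) (ltW s0 : s \in Num.nneg) (ler01 : (1:R) \in Num.nneg) s1.
  by rewrite powR1.
have -> : C ^+ m * C * C `^ p * ((2 * b) ^+ m * a * b) * s `^ (p - 1) =
  (C ^+ m * C `^ p * s `^ (p - 1)) * (C * ((2 * b) ^+ m * a * b)).
  move: (C ^+ m) (C `^ p) (s `^ (p - 1)) ((2 * b) ^+ m) => cm cp sp bm; ring.
apply: mulr_ile1 => //.
- by rewrite !mulr_ge0 ?powR_ge0 ?exprn_ge0 // ltW.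
apply: mulr_ge0; first exact: ltW.
apply: mulr_ge0; last exact: ltW.
apply: mulr_ge0; last exact: ltW.
apply: exprn_ge0; apply: mulr_ge0 => //; exact: ltW.
have cm0 : 0 <= C ^+ m by rewrite exprn_ge0 // ltW.
apply: mulr_ile1 => //; [apply: mulr_ge0 => //; exact: powR_ge0 | exact: powR_ge0 |].
by apply: mulr_ile1 => //; exact: powR_ge0.
Qed.

End H.


Theorem lemma2p4 (R : realType) (n : nat) (p : R) :
  (2 <= n)%N -> 1 <= p ->
  exists C : R, 0 < C /\
    smooth_on (@Omega R n) (@wfun R n p C) /\
    convex_on (@Omega R n) (@wfun R n p C) /\
    (forall x, @Omega R n x ->
       \det (hessian (@wfun R n p C) x) <= `|@wfun R n p C x| `^ (- p)) /\
    (forall x, bdry (@Omega R n) x -> @wfun R n p C x = 0).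
Proof.
move=> n2 p1; case: n n2 => [//|m] n2.
pose N := m.+1%:R + p; pose a := 2 / N; pose b := (N - 2) / N.
have hm : (2 : R) <= m.+1%:R by rewrite (ler_nat R 2 m.+1).
have N2 : 2 < N by rewrite /N; lra.
have N0 : 0 < N by lra.
have a0 : 0 < a by rewrite /a divr_gt0 //; lra.
have b0 : 0 < b by rewrite /b divr_gt0 //; lra.
have ab : a + b = 1.
  by rewrite /a /b -mulrDl addrC subrK divff // gt_eqF.
pose K0 := (2 * b) ^+ m * a * b.
have K00 : 0 < K0.
  rewrite /K0; apply: mulr_gt0 => //; apply: mulr_gt0 => //.
  by apply: exprn_gt0; apply: mulr_gt0.
pose C := 1 / (K0 + 1).
have C0 : 0 < C by rewrite /C divr_gt0 //; lra.
have C1 : C <= 1 by rewrite /C ler_pdivrMr; lra.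
have CK : C * K0 <= 1.
  by rewrite /C mul1r mulrC -/(K0 / (K0 + 1)) ler_pdivrMr; lra.
exists C; split => //; split; first exact: (K_smooth (K_w p C)).
split; first exact: (@w_convex R m C a b (ltW C0) a0 b0 ab).
split.
  by move=> x Ux; exact: (@final_ineq R m p C x p1 C0 C1 a0 b0 ab CK Ux).
move=> x bx; apply: (@bdry_zero R m C a b x (lt0r_neq0 a0) ab bx).
Qed.
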